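(* The consecutive patterns $\underline{0102}$ and $\underline{0112}$ are reciprocal: for every $n\ge 1$ and all $S,T\subseteq[n]$, $$|\{\epsilon\in I_n:\operatorname{Em}(\underline{0102},\epsilon)=S,\ \operatorname{Em}(\underline{0112},\epsilon)=T\}|=|\{\epsilon\in I_n:\operatorname{Em}(\underline{0102},\epsilon)=T,\ \operatorname{Em}(\underline{0112},\epsilon)=S\}|.$$
   Context: An inversion sequence of length $n$ is an integer sequence $\epsilon=\epsilon_1\cdots\epsilon_n$ with $0\le\epsilon_i<i$ for all $i$; $I_n$ denotes the set of them. The reduction of an integer word is obtained by replacing every occurrence of its $k$-th smallest distinct value by $k-1$. A consecutive pattern $p=\underline{p_1\cdots p_r}$ occurs in a sequence $\epsilon$ at position $i$ if the reduction of $\epsilon_i\epsilon_{i+1}\cdots\epsilon_{i+r-1}$ equals $p_1\cdots p_r$. $\operatorname{Em}(p,\epsilon)$ is the set of all positions $i$ at which $p$ occurs in $\epsilon$, and $[n]=\{1,\dots,n\}$. *)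

(* Defs.v *)
From mathcomp Require Import all_boot.
Set Implicit Arguments. Unset Strict Implicit. Unset Printing Implicit Defensive.

Definition reduction (w : seq nat) : seq nat :=
  let vals := sort leq (undup w) in map (fun x => index x vals) w.

(* An inversion sequence of length n: eps_i < i for 1 <= i <= n
   (0-indexed: nth 0 eps j < j.+1). *)
Definition is_inv_seq (n : nat) (eps : seq nat) : bool :=
  (size eps == n) && all (fun j => nth 0 eps j < j.+1) (iota 0 n).

(* The set I_n, as a finite set of n-tuples over 'I_n (all entries are < n). *)
Definition Iseq (n : nat) : {set n.-tuple 'I_n} :=
  [set e : n.-tuple 'I_n | is_inv_seq n (map val e)].

(* The consecutive pattern p occurs in eps at (1-indexed) position i:
   the window eps_i ... eps_{i+r-1} lies inside eps and its reduction is p. *)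
Definition occurs_at (p eps : seq nat) (i : nat) : bool :=
  (1 <= i) && (i + size p - 1 <= size eps) &&
  (reduction (take (size p) (drop i.-1 eps)) == p).

(* Em(p, eps) as a subset of [n]; the element k : 'I_n represents position k+1. *)
Definition Em (n : nat) (p : seq nat) (e : n.-tuple 'I_n) : {set 'I_n} :=
  [set k : 'I_n | occurs_at p (map val e) k.+1].

Definition pat0102 : seq nat := [:: 0; 1; 0; 2].
Definition pat0112 : seq nat := [:: 0; 1; 1; 2].

(* Main.v *)
Require Import Defs.
From mathcomp Require Import all_boot zify.
Set Implicit Arguments. Unset Strict Implicit.

Section Red.
Variable w : seq nat.
Let vals := sort leq (undup w).

Lemma vals_sorted : sorted ltn vals.
Proof. by rewrite ltn_sorted_uniq_leq sort_uniq undup_uniq sort_sorted //; apply: leq_total. Qed.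

Lemma vals_sorted' : sorted leq vals.
Proof. by apply: sort_sorted; apply: leq_total. Qed.

Lemma mem_vals x : (x \in vals) = (x \in w).
Proof. by rewrite mem_sort mem_undup. Qed.

Lemma idx_lt x y : x \in w -> y \in w -> (index x vals < index y vals) = (x < y).
Proof.
move=> xw yw; rewrite -!mem_vals in xw yw.
have hx : index x vals \in [pred n | n < size vals] by rewrite inE index_mem.
have hy : index y vals \in [pred n | n < size vals] by rewrite inE index_mem.
apply/idP/idP => h.
- by have := sorted_ltn_nth ltn_trans 0 vals_sorted _ _ hx hy h; rewrite !nth_index.
- rewrite ltnNge; apply/negP => h2.
  have := sorted_leq_nth leq_trans leqnn 0 vals_sorted' _ _ hy hx h2.
  by rewrite !nth_index // leqNgt h.
Qed.

Lemma idx_eq x y : x \in w -> y \in w -> (index x vals == index y vals) = (x == y).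
Proof.
move=> xw yw; rewrite -!mem_vals in xw yw.
apply/eqP/eqP => [h|->] //; exact: index_inj h.
Qed.

Lemma idx_size x : x \in w -> index x vals < size vals.
Proof. by move=> xw; rewrite index_mem mem_vals. Qed.
End Red.

Lemma red4 a b c d : reduction [:: a; b; c; d] =
  [:: index a (sort leq (undup [:: a; b; c; d])); index b (sort leq (undup [:: a; b; c; d]));
      index c (sort leq (undup [:: a; b; c; d])); index d (sort leq (undup [:: a; b; c; d]))].
Proof. by []. Qed.

Lemma redA a b c d : (reduction [:: a; b; c; d] == pat0102) = [&& a < b, c == a & b < d].
Proof.
rewrite red4 /pat0102.
set w := [:: a; b; c; d]. set v := sort leq (undup w).
have ha : a \in w by rewrite !inE eqxx.
have hb : b \in w by rewrite !inE eqxx !orbT.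
have hc : c \in w by rewrite !inE eqxx !orbT.
have hd : d \in w by rewrite !inE eqxx !orbT.
apply/idP/idP.
- case/eqP => e1 e2 e3 e4.
  rewrite -(idx_lt ha hb) -(idx_eq hc ha) -(idx_lt hb hd) e1 e2 e3 e4 //.
- case/and3P => h1 /eqP h2 h3.
  have hs : size v = 3.
    rewrite size_sort (@perm_size _ _ [:: a; b; d]) //.
    apply: uniq_perm; first exact: undup_uniq.
      rewrite /= !inE; apply/and3P; split => //; lia.
    by move=> x; rewrite mem_undup /w h2 !inE; case: (x == a); case: (x == b).
  have i1 := idx_lt ha hb; have i2 := idx_lt hb hd.
  have s1 := idx_size hd.
  rewrite h1 h3 hs in i1 i2 s1;
  rewrite h2.
  apply/eqP; rewrite /v; congr [:: _; _; _; _]; lia.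
Qed.

Lemma redB a b c d : (reduction [:: a; b; c; d] == pat0112) = [&& a < b, c == b & b < d].
Proof.
rewrite red4 /pat0112.
set w := [:: a; b; c; d]. set v := sort leq (undup w).
have ha : a \in w by rewrite !inE eqxx.
have hb : b \in w by rewrite !inE eqxx !orbT.
have hc : c \in w by rewrite !inE eqxx !orbT.
have hd : d \in w by rewrite !inE eqxx !orbT.
apply/idP/idP.
- case/eqP => e1 e2 e3 e4.
  rewrite -(idx_lt ha hb) -(idx_eq hc hb) -(idx_lt hb hd) e1 e2 e3 e4 //.
- case/and3P => h1 /eqP h2 h3.
  have hs : size v = 3.
    rewrite size_sort (@perm_size _ _ [:: a; b; d]) //.
    apply: uniq_perm; first exact: undup_uniq.
      rewrite /= !inE; apply/and3P; split => //; lia.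
    by move=> x; rewrite mem_undup /w h2 !inE; case: (x == a); case: (x == b).
  have i1 := idx_lt ha hb; have i2 := idx_lt hb hd.
  have s1 := idx_size hd.
  rewrite h1 h3 hs in i1 i2 s1;
  rewrite h2.
  apply/eqP; rewrite /v; congr [:: _; _; _; _]; lia.
Qed.

Definition cyc (x x' y v : nat) : nat :=
  if v == x then y else if v == y then x' else if v == x' then x else v.

Lemma cyc_le x x' y v : x <= y -> x' <= y -> v <= y -> cyc x x' y v <= y.
Proof. rewrite /cyc; do !case: eqP; lia. Qed.

Lemma cyc_y x x' y v : x < y -> x' < y -> (cyc x x' y v == y) = (v == x).
Proof. rewrite /cyc; do !case: eqP; lia. Qed.

Lemma cyc_x' x x' y v : x < y -> x' < y -> (cyc x x' y v == x') = (v == y).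
Proof. rewrite /cyc; do !case: eqP; lia. Qed.

Lemma cyc_inj x x' y v v' : x < y -> x' < y -> cyc x x' y v = cyc x x' y v' -> v = v'.
Proof. rewrite /cyc; do !case: eqP; lia. Qed.

Definition G (E : nat -> nat) (n k : nat) : bool :=
  [&& E k < E k.+1, E k.+2 <= E k.+1, k.+3 < n & E k.+1 < E k.+3].

Fixpoint ph (E : nat -> nat) (n j : nat) : nat :=
  match j with
  | S (S k) => if G E n k then cyc (E k) (ph E n k) (E k.+1) (E k.+2) else E k.+2
  | _ => E j
  end.

Section Phi.
Variables (E : nat -> nat) (n : nat).
Notation F := (ph E n).

Lemma ph0 : F 0 = E 0. Proof. by []. Qed.
Lemma ph1 : F 1 = E 1. Proof. by []. Qed.
Lemma phS2 k : F k.+2 = if G E n k then cyc (E k) (F k) (E k.+1) (E k.+2) else E k.+2.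
Proof. by []. Qed.

Lemma asc_eq j : E j < E j.+1 -> F j.+1 = E j.+1.
Proof.
case: j => [|k] // h; rewrite phS2 /G.
by rewrite (leqNgt (E k.+2)) h /= andbF.
Qed.

Lemma bound k : (F k < F k.+1) = (E k < E k.+1) -> G E n k -> F k.+2 <= E k.+1.
Proof.
move=> IH /and4P [h1 h2 h3 h4].
rewrite phS2 /G h1 h2 h3 h4 /=.
rewrite h1 asc_eq // in IH.
apply: cyc_le => //; lia.
Qed.

Lemma asc j : (F j < F j.+1) = (E j < E j.+1).
Proof.
elim/ltn_ind: j => j IH.
case: (ltnP (E j) (E j.+1)) => h.
- rewrite asc_eq //; apply/idP.
  case: j IH h => [|[|k]] IH h //.
  case hG: (G E n k); last by rewrite phS2 hG.
  have := bound (IH k (ltnW (ltnSn _))) hG.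
  move: hG => /and4P [_ _ _ h4]; lia.
- apply/negbTE; rewrite -leqNgt.
  case: j IH h => [|k] IH h //.
  case hG: (G E n k).
  + have := bound (IH k (ltnSn _)) hG.
    move: (hG) => /and4P [h1 _ _ _]; by rewrite (asc_eq h1).
  + rewrite phS2 hG; suff: E k.+1 <= F k.+1 by lia.
    case: k IH h hG => [|m] IH h hG //.
    rewrite phS2; case hG': (G E n m) => //.
    move: hG' => /and4P [_ h2 _ h4]; lia.
Qed.

Lemma frame k : G F n k = G E n k.
Proof.
rewrite /G (asc k) (leqNgt (F k.+2)) (asc k.+1) -leqNgt.
case h1: (E k < E k.+1); rewrite ?andFb ?andTb //.
case h2: (E k.+2 <= E k.+1); rewrite ?andFb ?andTb //.
case h3: (k.+3 < n); rewrite ?andFb ?andTb //.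
rewrite (asc_eq h1).
case: (ltnP (E k.+2) (E k.+3)) => h4.
- by rewrite (asc_eq h4).
- have a1 : F k.+2 <= F k.+1 by rewrite leqNgt (asc k.+1) -leqNgt.
  have a2 : F k.+3 <= F k.+2 by rewrite leqNgt (asc k.+2) -leqNgt.
  have e := asc_eq h1.
  apply/idP/idP; lia.
Qed.

Definition occA (E : nat -> nat) k := [&& k.+3 < n, E k < E k.+1, E k.+2 == E k & E k.+1 < E k.+3].
Definition occB (E : nat -> nat) k := [&& k.+3 < n, E k < E k.+1, E k.+2 == E k.+1 & E k.+1 < E k.+3].

Lemma occA_G (E' : nat -> nat) k : occA E' k = G E' n k && (E' k.+2 == E' k).
Proof.
rewrite /occA /G; apply/idP/idP => [/and4P[h3 h1 /eqP e h4] | /andP[/and4P[h1 h2 h3 h4] /eqP e]].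
- by rewrite h1 h3 h4 e eqxx (ltnW h1).
- by rewrite h3 h1 e eqxx h4.
Qed.
Lemma occB_G (E' : nat -> nat) k : occB E' k = G E' n k && (E' k.+2 == E' k.+1).
Proof.
rewrite /occB /G; apply/idP/idP => [/and4P[h3 h1 /eqP e h4] | /andP[/and4P[h1 h2 h3 h4] /eqP e]].
- by rewrite h1 h3 h4 e eqxx leqnn.
- by rewrite h3 h1 e eqxx h4.
Qed.

Lemma occAF k : occA F k = occB E k.
Proof.
rewrite occA_G occB_G frame.
case hG: (G E n k); rewrite ?andFb ?andTb //.
have hb := asc k; move: (hG) => /and4P [h1 h2 h3 h4].
rewrite h1 (asc_eq h1) in hb.
by rewrite phS2 hG cyc_x'.
Qed.

Lemma occBF k : occB F k = occA E k.
Proof.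
rewrite occA_G occB_G frame.
case hG: (G E n k); rewrite ?andFb ?andTb //.
have hb := asc k; move: (hG) => /and4P [h1 h2 h3 h4].
rewrite h1 (asc_eq h1) in hb.
by rewrite phS2 hG (asc_eq h1) cyc_y.
Qed.

Lemma ph_le j : (forall i, i < n -> E i <= i) -> j < n -> F j <= j.
Proof.
move=> hE; case: j => [|[|k]] hj; rewrite ?ph0 ?ph1; try by apply: hE.
case hG: (G E n k); last by rewrite phS2 hG; apply: hE.
have := bound (asc k) hG; have := hE k.+1; lia.
Qed.
End Phi.

Lemma occA_ext n E1 E2 k : (forall i, i < n -> E1 i = E2 i) -> occA n E1 k = occA n E2 k.
Proof.
move=> h; rewrite /occA; case h3: (k.+3 < n) => //=.
by rewrite !h //; lia.
Qed.
Lemma occB_ext n E1 E2 k : (forall i, i < n -> E1 i = E2 i) -> occB n E1 k = occB n E2 k.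
Proof.
move=> h; rewrite /occB; case h3: (k.+3 < n) => //=.
by rewrite !h //; lia.
Qed.

Lemma ph_inj n E1 E2 : (forall i, i < n -> ph E1 n i = ph E2 n i) ->
  forall j, j < n -> E1 j = E2 j.
Proof.
move=> hF; elim/ltn_ind => j IH hj.
case: j IH hj => [|[|k]] IH hj; first exact: hF 0 hj.
  exact: hF 1 hj.
have := hF _ hj; rewrite !phS2 -(frame E1) -(frame E2).
have hG : G (ph E1 n) n k = G (ph E2 n) n k.
  rewrite /G; case h3: (k.+3 < n); last by rewrite !andbF.
  by rewrite !hF //; lia.
rewrite hG; case hg: (G (ph E2 n) n k); last by [].
rewrite (IH k) // ?(IH k.+1) // ?hF //; try lia.
have := hg; rewrite frame => /and4P [h1 _ _ _].
have hb := asc E2 n k; rewrite h1 (@asc_eq E2 n k h1) in hb.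
by apply: cyc_inj.
Qed.

Definition Ef n (e : n.-tuple 'I_n) : nat -> nat := fun i => nth 0 (map val e) i.
Definition phiT n (e : n.-tuple 'I_n) : n.-tuple 'I_n :=
  [tuple insubd i (ph (Ef e) n i) | i < n].

Lemma nth_val n (t : n.-tuple 'I_n) (i : 'I_n) : nth 0 (map val t) i = tnth t i.
Proof. by rewrite (nth_map i) ?size_tuple // -tnth_nth. Qed.

Lemma inv_le n (e : n.-tuple 'I_n) : e \in Iseq n -> forall i, i < n -> Ef e i <= i.
Proof.
rewrite inE /is_inv_seq => /andP[_ /allP h] i hi.
by have := h i; rewrite mem_iota add0n => /(_ hi).
Qed.

Lemma phiT_nth n (e : n.-tuple 'I_n) : e \in Iseq n ->
  forall i, i < n -> Ef (phiT e) i = ph (Ef e) n i.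
Proof.
move=> he i hi.
have -> : Ef (phiT e) i = tnth (phiT e) (Ordinal hi) by exact: (nth_val (phiT e) (Ordinal hi)).
rewrite tnth_mktuple val_insubd /=.
by rewrite (leq_ltn_trans (ph_le (inv_le he) hi) hi).
Qed.

Lemma phiT_inv n (e : n.-tuple 'I_n) : e \in Iseq n -> phiT e \in Iseq n.
Proof.
move=> he; rewrite inE /is_inv_seq size_map size_tuple eqxx /=.
apply/allP => j; rewrite mem_iota add0n => hj.
change (Ef (phiT e) j < j.+1).
by rewrite phiT_nth // ltnS; apply: ph_le => //; apply: inv_le.
Qed.

Lemma occurs4 (s : seq nat) k p : size p = 4 -> occurs_at p s k.+1 =
  (k.+3 < size s) && (reduction [:: nth 0 s k; nth 0 s k.+1; nth 0 s k.+2; nth 0 s k.+3] == p).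
Proof.
move=> hp; rewrite /occurs_at hp.
case h: (k.+3 < size s).
- have -> : (k.+1 + 4 - 1 <= size s) by lia.
  have e1 : drop k s = nth 0 s k :: nth 0 s k.+1 :: nth 0 s k.+2 :: nth 0 s k.+3 :: drop k.+4 s.
    rewrite (@drop_nth _ 0 k) ?(@drop_nth _ 0 k.+1) ?(@drop_nth _ 0 k.+2) ?(@drop_nth _ 0 k.+3) //; lia.
  by rewrite e1 /= take0.
- have -> : (k.+1 + 4 - 1 <= size s) = false by move/negbT: h => h; apply/negbTE; lia.
  by [].
Qed.

Lemma EmA n (e : n.-tuple 'I_n) : Em pat0102 e = [set k : 'I_n | occA n (Ef e) k].
Proof. by apply/setP => k; rewrite !inE occurs4 // size_map size_tuple redA. Qed.
Lemma EmB n (e : n.-tuple 'I_n) : Em pat0112 e = [set k : 'I_n | occB n (Ef e) k].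
Proof. by apply/setP => k; rewrite !inE occurs4 // size_map size_tuple redB. Qed.

Lemma EmAF n (e : n.-tuple 'I_n) : e \in Iseq n -> Em pat0102 (phiT e) = Em pat0112 e.
Proof.
move=> he; apply/setP => k; rewrite EmA EmB !inE.
by rewrite (occA_ext _ (phiT_nth he)) occAF.
Qed.
Lemma EmBF n (e : n.-tuple 'I_n) : e \in Iseq n -> Em pat0112 (phiT e) = Em pat0102 e.
Proof.
move=> he; apply/setP => k; rewrite EmA EmB !inE.
by rewrite (occB_ext _ (phiT_nth he)) occBF.
Qed.

Lemma key n (S T : {set 'I_n}) :
  #|[set e in Iseq n | (Em pat0102 e == S) && (Em pat0112 e == T)]| <=
  #|[set e in Iseq n | (Em pat0102 e == T) && (Em pat0112 e == S)]|.
Proof.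
rewrite -(card_in_imset (f:=@phiT n)).
  apply: subset_leq_card; apply/subsetP => _ /imsetP[e he ->].
  move: he; rewrite !inE => /andP[hI /andP[/eqP h1 /eqP h2]].
  have hIe : e \in Iseq n by rewrite inE.
  have := phiT_inv hIe; rewrite inE => ->.
  by rewrite (EmAF hIe) (EmBF hIe) h1 h2 !eqxx.
move=> e1 e2; rewrite !inE => /andP[h1 _] /andP[h2 _] heq.
have {h1} h1 : e1 \in Iseq n by rewrite inE.
have {h2} h2 : e2 \in Iseq n by rewrite inE.
have hF : forall i, i < n -> ph (Ef e1) n i = ph (Ef e2) n i.
  by move=> i hi; rewrite -!phiT_nth // heq.
have hE := ph_inj hF.
apply: val_inj; apply: (inj_map val_inj).
apply: (eq_from_nth (x0:=0)); first by rewrite !size_map !size_tuple.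
by move=> i; rewrite size_map size_tuple => hi; exact: hE i hi.
Qed.

Theorem mainTheorem1 (n : nat) (S T : {set 'I_n}) :
  1 <= n ->
  #|[set e in Iseq n | (Em pat0102 e == S) && (Em pat0112 e == T)]| =
  #|[set e in Iseq n | (Em pat0102 e == T) && (Em pat0112 e == S)]|.
Proof. by move=> _; apply/eqP; rewrite eqn_leq !key. Qed.
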